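(* Assume there exists a decomposition of $V$ which is split with respect to the orderings $E_0,\ldots,E_d$ and $E^*_0,\ldots,E^*_d$. Then $A,A^*$ is a Leonard pair if and only if $(A;A^*;\{E_i\}_{i=0}^d;\{E^*_i\}_{i=0}^d)$ is a Leonard system.
   Context: Let $\mathbb K$ be a field, $d\ge 0$ an integer, and $\mathcal A$ a $\mathbb K$-algebra isomorphic to $\mathrm{Mat}_{d+1}(\mathbb K)$, with identity $I$. An element of $\mathcal A$ is multiplicity-free if it has $d+1$ mutually distinct eigenvalues, all in $\mathbb K$; for such $A$ with eigenvalues $\theta_0,\ldots,\theta_d$, the primitive idempotent associated with $\theta_i$ is $E_i=\prod_{j\ne i}(A-\theta_jI)/(\theta_i-\theta_j)$. Standing setup: $A,A^*$ are multiplicity-free elements of $\mathcal A$ ($A^*$ is just a name, not an adjoint); $E_0,\ldots,E_d$ is an ordering of the primitive idempotents of $A$ and $\theta_i$ is the eigenvalue of $A$ for $E_i$; $E^*_0,\ldots,E^*_d$ is an ordering of the primitive idempotents of $A^*$ and $\theta^*_i$ is the eigenvalue of $A^*$ for $E^*_i$; $V$ is an irreducible left $\mathcal A$-module. A decomposition of $V$ is a sequence $U_0,\ldots,U_d$ of 1-dimensional subspaces with $V=U_0+\cdots+U_d$ (direct sum); it is split (with respect to the orderings $E_0,\ldots,E_d$ and $E^*_0,\ldots,E^*_d$) if $(A-\theta_iI)U_i=U_{i+1}$ for $0\le i\le d-1$, $(A-\theta_dI)U_d=0$, $(A^*-\theta^*_iI)U_i=U_{i-1}$ for $1\le i\le d$,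 and $(A^*-\theta^*_0I)U_0=0$. A square matrix is tridiagonal if every nonzero entry lies on the diagonal, subdiagonal or superdiagonal, and irreducible tridiagonal if moreover all sub- and superdiagonal entries are nonzero. $A,A^*$ is a Leonard pair if there is a basis of $V$ in which $A$ is irreducible tridiagonal and $A^*$ diagonal, and a basis of $V$ in which $A^*$ is irreducible tridiagonal and $A$ diagonal. The sequence $(A;A^*;\{E_i\};\{E^*_i\})$ is a Leonard system if for all $0\le i,j\le d$: $E^*_iAE^*_j=0$ if $|i-j|>1$, $E^*_iAE^*_j\ne0$ if $|i-j|=1$, $E_iA^*E_j=0$ if $|i-j|>1$, and $E_iA^*E_j\ne0$ if $|i-j|=1$. *)

(* Defs.v *)
From HB Require Import structures.
From mathcomp Require Import all_boot all_order all_algebra.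
Set Implicit Arguments. Unset Strict Implicit. Unset Printing Implicit Defensive.
Import Order.TTheory GRing.Theory Num.Theory.
Local Open Scope ring_scope.

(* The algebra  \mathcal A  is modelled as  'M[K]_(d.+1)  and the irreducible
   left module V as the column space  'cV[K]_(d.+1)  with action  v |-> A *m v.
   A subspace of V is represented by a matrix whose COLUMN space is it;
   column spaces are compared through transposes with mathcomp's %MS. *)

Section LeonardDefs.
Variables (K : fieldType) (d : nat).
Local Notation M := 'M[K]_(d.+1).

Definition mult_free (A : M) : Prop :=
  exists th : 'I_d.+1 -> K, injective th /\ forall i, eigenvalue A (th i).

Definition eig_ordering (A : M) (th : 'I_d.+1 -> K) : Prop :=
  injective th /\ forall i, eigenvalue A (th i).

Definition prim_idem (A : M) (th : 'I_d.+1 -> K) (i : 'I_d.+1) : M :=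
  \prod_(j < d.+1 | j != i) ((th i - th j)^-1 *: (A - (th j)%:M)).

Definition colsp_eq m n (X : 'M[K]_(d.+1, m)) (Y : 'M[K]_(d.+1, n)) : bool :=
  (X^T == Y^T)%MS.

Definition decomposition (U : 'I_d.+1 -> M) : Prop :=
  (forall i, \rank (U i) = 1%N) /\
  (\sum_(i < d.+1) (U i)^T :=: 1%:M)%MS /\
  mxdirect (\sum_(i < d.+1) (U i)^T).

Definition split_decomposition (A As : M) (th ths : 'I_d.+1 -> K)
    (U : 'I_d.+1 -> M) : Prop :=
  decomposition U /\
  (forall i j : 'I_d.+1, j = i.+1 :> nat ->
     colsp_eq ((A - (th i)%:M) *m U i) (U j)) /\
  (A - (th ord_max)%:M) *m U ord_max = 0 /\
  (forall i j : 'I_d.+1, j = i.+1 :> nat ->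
     colsp_eq ((As - (ths j)%:M) *m U j) (U i)) /\
  (As - (ths ord0)%:M) *m U ord0 = 0.

Definition tridiagonal (B : M) : Prop :=
  forall i j : 'I_d.+1, (i.+1 < j)%N \/ (j.+1 < i)%N -> B i j = 0.

Definition irred_tridiagonal (B : M) : Prop :=
  tridiagonal B /\
  forall i j : 'I_d.+1, j = i.+1 :> nat \/ i = j.+1 :> nat -> B i j != 0.

Definition mx_in_basis (P B : M) : M := invmx P *m B *m P.

Definition leonard_pair (A As : M) : Prop :=
  (exists P : M, P \in unitmx /\
     irred_tridiagonal (mx_in_basis P A) /\ is_diag_mx (mx_in_basis P As)) /\
  (exists Q : M, Q \in unitmx /\
     irred_tridiagonal (mx_in_basis Q As) /\ is_diag_mx (mx_in_basis Q A)).

Definition leonard_system (A As : M) (E Es : 'I_d.+1 -> M) : Prop :=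
  forall i j : 'I_d.+1,
    ((i.+1 < j)%N \/ (j.+1 < i)%N -> Es i *m A *m Es j = 0) /\
    (j = i.+1 :> nat \/ i = j.+1 :> nat -> Es i *m A *m Es j != 0) /\
    ((i.+1 < j)%N \/ (j.+1 < i)%N -> E i *m As *m E j = 0) /\
    (j = i.+1 :> nat \/ i = j.+1 :> nat -> E i *m As *m E j != 0).

End LeonardDefs.

(* Main.v *)
Require Import Defs.
From HB Require Import structures.
From mathcomp Require Import all_boot all_order all_algebra.
From mathcomp Require Import zify.
Set Implicit Arguments. Unset Strict Implicit. Unset Printing Implicit Defensive.
Import Order.TTheory GRing.Theory Num.Theory.
Local Open Scope ring_scope.

Section Gen.
Variables (K : fieldType) (d : nat).
Local Notation M := 'M[K]_(d.+1).
Implicit Types (A B P X Y : M) (th : 'I_d.+1 -> K).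

Definition lag th (j : 'I_d.+1) : {poly K} :=
  \prod_(k < d.+1 | k != j) ((th j - th k)^-1 *: ('X - (th k)%:P)).

Lemma prim_idemE A th j : prim_idem A th j = horner_mx A (lag th j).
Proof.
rewrite /prim_idem /lag rmorph_prod; apply: eq_bigr => k _.
by rewrite -[X in _ = X]/(horner_mx A _) horner_mxZ rmorphB /= horner_mx_X horner_mx_C.
Qed.

Lemma horner_conj P A p : P \in unitmx ->
  horner_mx (invmx P *m A *m P) p = invmx P *m horner_mx A p *m P.
Proof.
move=> uP; elim/poly_ind: p => [|p c IH].
  by rewrite !rmorph0 mulmx0 mul0mx.
rewrite !rmorphD !rmorphM /= !horner_mx_X !horner_mx_C IH.
rewrite -!mulmxE mulmxDr mulmxDl -!mulmxA; congr (_ + _).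
  by congr (_ *m _); rewrite mulKVmx.
by rewrite -scalar_mxC mulKmx.
Qed.

Lemma eig_horner X (N : M) a p : X *m N = a *: N ->
  horner_mx X p *m N = p.[a] *: N.
Proof.
move=> hX; elim/poly_ind: p => [|p c IH].
  by rewrite rmorph0 mul0mx horner0 scale0r.
rewrite rmorphD rmorphM /= horner_mx_X horner_mx_C mulmxDl -mulmxA hX.
rewrite -scalemxAr IH scalerA mul_scalar_mx hornerE /= -scalerDl.
by rewrite hornerMX hornerC mulrC.
Qed.

Lemma lag_eval th j l : injective th -> (lag th j).[th l] = (j == l)%:R.
Proof.
move=> inj; rewrite /lag horner_prod.
case: eqP => [->|/eqP njl].
  rewrite big1 // => k nk; rewrite hornerZ hornerXsubC mulVf //.
  by rewrite subr_eq0; apply: contra nk => /eqP/inj ->.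
rewrite (bigD1 l) 1?eq_sym //= hornerZ hornerXsubC subrr mulr0 mul0r //.
Qed.


Definition ut (R : M) := forall i j : 'I_d.+1, (j < i)%N -> R i j = 0.

Lemma ut_mul A B : ut A -> ut B ->
  ut (A *m B) /\ forall i, (A *m B) i i = A i i * B i i.
Proof.
move=> uA uB; split.
  move=> i j ji; rewrite mxE big1 // => n _.
  case: (ltnP n i) => [ni|iN]; first by rewrite uA // mul0r.
  by rewrite uB ?mulr0 //; lia.
move=> i; rewrite mxE (bigD1 i) //= big1 ?addr0 // => n ni.
have : (n : nat) != i by [].
case: (ltnP n i) => [lt _|le ne]; first by rewrite uA // mul0r.
by rewrite uB ?mulr0 //; lia.
Qed.

Lemma ut_horner R p : ut R ->
  ut (horner_mx R p) /\ forall i, horner_mx R p i i = p.[R i i].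
Proof.
move=> uR; elim/poly_ind: p => [|p c [IH1 IH2]].
  by rewrite rmorph0; split => [i j _|i]; rewrite ?mxE ?horner0.
rewrite rmorphD rmorphM /= horner_mx_X horner_mx_C -mulmxE.
have [h1 h2] := ut_mul IH1 uR.
split => [i j ji|i]; rewrite mxE [in X in _ + X]mxE.
  by rewrite h1 // add0r -val_eqE /= gtn_eqF.
by rewrite h2 IH2 eqxx mulr1n hornerD hornerMX hornerC.
Qed.


Definition Pl th (m : nat) : {poly K} :=
  \prod_(k < d.+1 | (k < m)%N) ('X - (th k)%:P).
Definition Pr th (m : nat) : {poly K} :=
  \prod_(k < d.+1 | (m < k)%N) ('X - (th k)%:P).

Lemma col_zero R th : ut R -> (forall k, R k k = th k) ->
  forall m x (l : 'I_d.+1), (l < m)%N -> horner_mx R (Pl th m) x l = 0.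
Proof.
move=> uR dR; elim=> [|m IH] x l lm; first by [].
have lo := ltn_ord l.
case: (ltnP m d.+1) => [md|dm]; last first.
  rewrite /Pl (eq_bigl (fun k : 'I_d.+1 => (k < m)%N)); first by apply: IH; lia.
  by move=> k /=; have hk := ltn_ord k; apply/idP/idP; lia.
pose o := Ordinal md.
have -> : Pl th m.+1 = Pl th m * ('X - (th o)%:P).
  rewrite /Pl (bigD1 o) /=; last by lia.
  rewrite mulrC; congr (_ * _); apply: eq_bigl => k.
  by rewrite -val_eqE /=; apply/idP/idP; lia.
rewrite rmorphM /= rmorphB /= horner_mx_X horner_mx_C -mulmxE mxE big1 // => n _.
rewrite !mxE.
case: (ltnP n m) => [nm|mn]; first by rewrite IH // mul0r.
case: (eqVneq n l) => [enl|nl].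
  have eno : n = o by apply: val_inj => /=; rewrite enl in mn *; lia.
  by rewrite -enl mulr1n eno dR subrr mulr0.
have ln : (l < n)%N by move: nl; rewrite -val_eqE /=; lia.
by rewrite uR // mulr0n subrr mulr0.
Qed.

Lemma row_zero R th : ut R -> (forall k, R k k = th k) ->
  forall t m, (d <= m + t)%N ->
  forall (l : 'I_d.+1) x, (m < l)%N -> horner_mx R (Pr th m) l x = 0.
Proof.
move=> uR dR; elim=> [|t IH] m dmt l x ml; have lo := ltn_ord l.
  by lia.
case: (ltnP m d) => [md|dm]; last by lia.
have md' : (m.+1 < d.+1)%N by lia.
pose o := Ordinal md'.
have -> : Pr th m = ('X - (th o)%:P) * Pr th m.+1.
  rewrite /Pr (bigD1 o) /=; last by lia.
  congr (_ * _); apply: eq_bigl => k.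
  by rewrite -val_eqE /=; apply/idP/idP; lia.
rewrite rmorphM /= rmorphB /= horner_mx_X horner_mx_C -mulmxE mxE big1 // => n _.
rewrite !mxE.
case: (ltnP m.+1 n) => [nm|mn]; first by rewrite IH ?mulr0 //; lia.
case: (eqVneq l n) => [enl|nl].
  have eno : l = o by apply: val_inj => /=; rewrite enl in ml *; lia.
  by rewrite -enl mulr1n eno dR subrr mul0r.
have ln : (n < l)%N by move: nl; rewrite -val_eqE /=; lia.
by rewrite uR // mulr0n subrr mul0r.
Qed.


Lemma lagE th j : lag th j =
  (\prod_(k < d.+1 | k != j) (th j - th k)^-1) *: (Pr th j * Pl th j).
Proof.
rewrite /lag scaler_prod; congr (_ *: _).
rewrite (bigID (fun k : 'I_d.+1 => (j < k)%N)) /=; congr (_ * _).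
  by apply: eq_bigl => k; rewrite -val_eqE /=; apply/idP/idP; lia.
by apply: eq_bigl => k; rewrite -val_eqE /=; apply/idP/idP; lia.
Qed.

Lemma lagZ th j : ('X - (th j)%:P) * lag th j =
  (\prod_(k < d.+1 | k != j) (th j - th k)^-1) *: Pl th d.+1.
Proof.
rewrite /lag scaler_prod -scalerAr; congr (_ *: _).
by rewrite /Pl [RHS](bigD1 j) ?ltn_ord //=; congr (_ * _); apply: eq_bigl => k; rewrite ltn_ord.
Qed.

Lemma conj3 S X Y Z : S \in unitmx ->
  (S *m X *m invmx S) *m (S *m Y *m invmx S) *m (S *m Z *m invmx S) =
  S *m (X *m Y *m Z) *m invmx S.
Proof.
move=> uS; rewrite !mulmxA mulmxKV // mulmxKV //.
Qed.

Lemma conj_eq0 S X : S \in unitmx -> (S *m X *m invmx S == 0) = (X == 0).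
Proof.
move=> uS; apply/eqP/eqP => [h|->]; last by rewrite mulmx0 mul0mx.
have := congr1 (fun Y => invmx S *m Y *m S) h.
by rewrite mulmx0 mul0mx !mulmxA mulVmx // mul1mx mulmxKV.
Qed.

Lemma entry_col (Y : M) k l : Y k l = (Y *m delta_mx l (@ord0 0)) k (@ord0 0).
Proof. by rewrite mxE (bigD1 l) //= mxE !eqxx mulr1 big1 ?addr0 // => j jl; rewrite mxE (negPf jl) mulr0. Qed.

Lemma conj_mul3 P X Y Z : P \in unitmx ->
  invmx P *m (X *m Y *m Z) *m P =
  (invmx P *m X *m P) *m (invmx P *m Y *m P) *m (invmx P *m Z *m P).
Proof. by move=> uP; rewrite !mulmxA !mulmxK. Qed.

Lemma iconj_eq0 P X : P \in unitmx -> (invmx P *m X *m P == 0) = (X == 0).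
Proof.
move=> uP; have uP' : invmx P \in unitmx by rewrite unitmx_inv.
have := conj_eq0 X uP'.
by rewrite invmxK.
Qed.

Lemma Bsym B : irred_tridiagonal B -> forall x y, (B x y == 0) = (B y x == 0).
Proof.
move=> [tri irr] x y.
have [h|[h|h]] : ((x.+1 < y)%N \/ (y.+1 < x)%N) \/
   (y = x.+1 :> nat \/ x = y.+1 :> nat) \/ x = y :> nat by lia.
- by rewrite (tri x y h) (tri y x) ?eqxx //; lia.
- by rewrite (negPf (irr _ _ h)) (negPf (irr y x _)) //; lia.
- by have -> : x = y by apply: val_inj.
Qed.

Lemma diag_delta (a : 'I_d.+1) : delta_mx a a = diag_mx (delta_mx 0 a) :> M.
Proof.
apply/matrixP => x y; rewrite !mxE eqxx /=.
by case: (eqVneq x a) => [?|xa]; case: (eqVneq y a) => [?|ya]; subst; rewrite ?eqxx ?mulr1n ?mulr0n ?mul0rn // ?(negPf xa) ?(negPf ya) ?mulr0n // eq_sym (negPf ya).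

Qed.

Lemma delta_conj (a b : 'I_d.+1) (B : M) :
  delta_mx a a *m B *m delta_mx b b = B a b *: delta_mx a b.
Proof.
rewrite !diag_delta mul_diag_mx mul_mx_diag; apply/matrixP => x y; rewrite !mxE eqxx /=.
case: (eqVneq x a) => [->|xa]; case: (eqVneq y b) => [->|yb];
  by rewrite ?mul1r ?mulr1 ?mul0r ?mulr0 ?mulr1n.
Qed.

Lemma delta_neq0 (a b : 'I_d.+1) : delta_mx a b != 0 :> M.
Proof.
apply/eqP => /matrixP /(_ a b); rewrite !mxE !eqxx /= => /eqP.
by rewrite oner_eq0.
Qed.

Lemma C4 (E : 'I_d.+1 -> M) Y P (s : 'I_d.+1 -> 'I_d.+1) : P \in unitmx ->
  (forall j, invmx P *m E j *m P = delta_mx (s j) (s j)) ->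
  forall k l, (E k *m Y *m E l == 0) = ((invmx P *m Y *m P) (s k) (s l) == 0).
Proof.
move=> uP hE k l; rewrite -(iconj_eq0 _ uP) conj_mul3 // !hE delta_conj.
by rewrite scaler_eq0 (negPf (delta_neq0 _ _)) orbF.
Qed.

Lemma diag_eq (D : M) : is_diag_mx D -> D = diag_mx (\row_i D i i).
Proof.
move=> /is_diag_mxP h; apply/matrixP => x y; rewrite !mxE.
case: (eqVneq x y) => [->|xy]; first by rewrite ?eqxx mulr1n.
by rewrite ?(negPf xy) mulr0n h.
Qed.

Lemma sym_diag (B : M) (fa fb : 'rV[K]_(d.+1)) :
  (forall x y, (B x y == 0) = (B y x == 0)) ->
  (diag_mx fa *m B *m diag_mx fb == 0) = (diag_mx fb *m B *m diag_mx fa == 0).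
Proof.
move=> hB; rewrite !mul_diag_mx !mul_mx_diag.
apply/eqP/eqP => /matrixP h; apply/matrixP => x y; have := h y x; rewrite !mxE => /eqP.
  rewrite !mulf_eq0 (hB y x) => e; apply/eqP; rewrite !mulf_eq0; move: e.
  by case: (fa 0 y == 0); case: (fb 0 x == 0); case: (B x y == 0).
rewrite !mulf_eq0 (hB y x) => e; apply/eqP; rewrite !mulf_eq0; move: e.
by case: (fa 0 x == 0); case: (fb 0 y == 0); case: (B x y == 0).
Qed.

Lemma C3 X Y P th : P \in unitmx -> is_diag_mx (invmx P *m X *m P) ->
  irred_tridiagonal (invmx P *m Y *m P) -> forall a b,
  (prim_idem X th a *m Y *m prim_idem X th b == 0) =
  (prim_idem X th b *m Y *m prim_idem X th a == 0).
Proof.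
move=> uP dX tY a b.
set B := invmx P *m Y *m P.
have hE c : invmx P *m prim_idem X th c *m P =
    diag_mx (map_mx (horner (lag th c)) (\row_i (invmx P *m X *m P) i i)).
  by rewrite prim_idemE -horner_conj // {1}(diag_eq dX) horner_mx_diag.
rewrite -(iconj_eq0 _ uP) -[RHS](iconj_eq0 _ uP) !conj_mul3 // !hE.
exact: sym_diag (Bsym tY).
Qed.

Lemma nz_row_eq (X : M) : \rank X = 1%N -> (nz_row X :=: X)%MS.
Proof.
move=> r1; apply/eqmxP; rewrite -(mxrank_leqif_eq (nz_row_sub X)).2.
by rewrite rank_rV nz_row_eq0 -mxrank_eq0 r1.
Qed.

Lemma split_step X (U1 U2 : M) : \rank U1 = 1%N -> \rank U2 = 1%N ->
  colsp_eq (X *m U1) U2 ->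
  exists2 c, c != 0 & X *m (nz_row U1^T)^T = c *: (nz_row U2^T)^T.
Proof.
move=> r1 r2 /eqmxP h.
have e1 := nz_row_eq (etrans (mxrank_tr U1) r1).
have e2 := nz_row_eq (etrans (mxrank_tr U2) r2).
have ew : ((X *m (nz_row U1^T)^T)^T :=: (nz_row U2^T))%MS.
  rewrite trmx_mul trmxK; apply: eqmx_trans (eqmxMr _ e1) _.
  rewrite -trmx_mul; apply: eqmx_trans h _; exact: eqmx_sym.
have /sub_rVP [c hc] : ((X *m (nz_row U1^T)^T)^T <= nz_row U2^T)%MS by rewrite ew.
exists c.
  apply/eqP => c0; move: hc; rewrite c0 scale0r => w0.
  by move: (eqmx_rank (introT eqmxP ew)); rewrite w0 mxrank0 (eqmx_rank (introT eqmxP e2)) mxrank_tr r2.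
by apply: trmx_inj; rewrite hc linearZ /= trmxK.
Qed.

Lemma split_zero X (U1 : M) : X *m U1 = 0 -> X *m (nz_row U1^T)^T = 0.
Proof.
move=> h; have /submxP [D hD] := nz_row_sub U1^T.
by rewrite hD trmx_mul trmxK mulmxA h mul0mx.
Qed.

Lemma shift X a (v w : 'cV[K]_(d.+1)) c : (X - a%:M) *m v = c *: w ->
  X *m v = a *: v + c *: w.
Proof. by rewrite mulmxBl mul_scalar_mx => /eqP; rewrite subr_eq addrC => /eqP. Qed.

Lemma prim_idem_rev X th (j : 'I_d.+1) :
  prim_idem X (th \o (@rev_ord d.+1)) j = prim_idem X th (rev_ord j).
Proof.
rewrite !prim_idemE /lag [in RHS](reindex_inj rev_ord_inj) /=; congr horner_mx.
by apply: eq_bigl => k; rewrite (inj_eq rev_ord_inj).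
Qed.

Section Core.
Variables (A As : M) (th ths : 'I_d.+1 -> K) (u : 'I_d.+1 -> 'cV[K]_(d.+1)).
Hypothesis hspan : ((1%:M : M) <= (\sum_(i < d.+1) <<(u i)^T>>)%MS)%MS.
Hypothesis hA : forall i j : 'I_d.+1, j = i.+1 :> nat ->
  exists2 c, c != 0 & A *m u i = th i *: u i + c *: u j.
Hypothesis hAd : A *m u ord_max = th ord_max *: u ord_max.
Hypothesis hAs : forall i j : 'I_d.+1, j = i.+1 :> nat ->
  exists c, As *m u j = ths j *: u j + c *: u i.
Hypothesis hAs0 : As *m u ord0 = ths ord0 *: u ord0.
Hypothesis inj : injective ths.

Definition Sm : M := (\matrix_(a, k) u a k 0 : M)^T.

Lemma S_unit : Sm \in unitmx.
Proof.
rewrite unitmx_tr -row_full_unit -sub1mx; apply: submx_trans hspan _.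
apply/sumsmx_subP => i _; rewrite genmxE.
have -> : (u i)^T = row i (\matrix_(a, k) u a k 0 : M) by apply/matrixP => a b; rewrite !mxE ord1.
exact: row_sub.
Qed.

Lemma Scol l : Sm *m delta_mx l (@ord0 0) = u l.
Proof.
apply/matrixP => a b; rewrite [b]ord1 !mxE (bigD1 l) //= !mxE !eqxx mulr1 big1 ?addr0 // => j jl.
by rewrite !mxE (negPf jl) mulr0.
Qed.

Lemma coordE X l a b m k : X *m u l = a *: u l + b *: u m ->
  (invmx Sm *m X *m Sm) k l = a *+ (k == l) + b *+ (k == m).
Proof.
move=> h.
rewrite (entry_col (invmx Sm *m X *m Sm)).
rewrite -(mulmxA _ Sm) Scol -mulmxA h mulmxDr -!scalemxAr -!Scol !mulmxA mulVmx ?S_unit //.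
by rewrite !mul1mx !mxE !eqxx !andbT !mulr_natr.
Qed.

Definition Lm : M := invmx Sm *m A *m Sm.
Definition Rm : M := invmx Sm *m As *m Sm.

Lemma R_entry k l : (exists c, Rm k l = ths l *+ (k == l) + c *+ (k.+1 == l)%N).
Proof.
case: (posnP l) => [l0|lp].
  have -> : l = ord0 by apply: val_inj.
  exists 0; rewrite /Rm (@coordE As ord0 (ths ord0) 0 ord0 k); last by rewrite scale0r addr0.
  by rewrite !mul0rn.
have lt : (l.-1 < d.+1)%N by have := ltn_ord l; lia.
have [c hc] := @hAs (Ordinal lt) l (esym (ltn_predK lp)).
exists c; rewrite /Rm (coordE _ hc); congr (_ + _); congr (_ *+ _).
by rewrite -val_eqE /=; apply/eqP/eqP; lia.
Qed.

Lemma R_ut : ut Rm.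
Proof.
move=> k l lk; have [c ->] := R_entry k l.
have -> : (k == l) = false by rewrite -val_eqE /=; apply/eqP; lia.
have -> : (k.+1 == l) = false by apply/eqP; lia.
by rewrite !mulr0n addr0.
Qed.

Lemma R_diag k : Rm k k = ths k.
Proof.
have [c ->] := R_entry k k.
have -> : (k.+1 == k) = false by apply/eqP; lia.
by rewrite eqxx mulr0n addr0.
Qed.

Lemma L_low (m n : 'I_d.+1) : (n.+1 < m)%N -> Lm m n = 0.
Proof.
move=> nm.
have lt : (n.+1 < d.+1)%N by have := ltn_ord m; lia.
have [c _ hc] := @hA n (Ordinal lt) erefl.
rewrite /Lm (coordE _ hc).
have -> : (m == n) = false by rewrite -val_eqE /=; apply/eqP; lia.
have -> : (m == Ordinal lt) = false by rewrite -val_eqE /=; apply/eqP; lia.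
by rewrite !mulr0n addr0.
Qed.

Lemma L_sub (i j : 'I_d.+1) : j = i.+1 :> nat -> Lm j i != 0.
Proof.
move=> ji; have [c c0 hc] := @hA i j ji.
rewrite /Lm (coordE _ hc).
have -> : (j == i) = false by rewrite -val_eqE /=; apply/eqP; lia.
by rewrite eqxx mulr0n add0r mulr1n.
Qed.

Definition Qm j : M := horner_mx Rm (lag ths j).

Lemma Qa (j x m : 'I_d.+1) : (m < j)%N -> Qm j x m = 0.
Proof.
move=> mj; rewrite /Qm lagE horner_mxZ rmorphM /= -mulmxE mxE mxE [X in _ * X]big1 ?mulr0 // => n _.
by rewrite (col_zero R_ut R_diag) ?mulr0.
Qed.

Lemma Qb (j n x : 'I_d.+1) : (j < n)%N -> Qm j n x = 0.
Proof.
move=> jn; rewrite /Qm lagE horner_mxZ rmorphM /= -mulmxE mxE mxE [X in _ * X]big1 ?mulr0 // => k _.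
by rewrite (@row_zero Rm ths R_ut R_diag d j) ?mul0r //; lia.
Qed.

Lemma Qc (j : 'I_d.+1) : Qm j j j = 1.
Proof.
have [_ h] := ut_horner (lag ths j) R_ut.
by rewrite /Qm h R_diag lag_eval // eqxx.
Qed.

Lemma Qeig (j : 'I_d.+1) : Rm *m Qm j = ths j *: Qm j.
Proof.
apply/eqP; rewrite -subr_eq0; apply/eqP.
have -> : Rm *m Qm j - ths j *: Qm j = horner_mx Rm (('X - (ths j)%:P) * lag ths j).
  by rewrite rmorphM /= rmorphB /= horner_mx_X horner_mx_C -mulmxE mulmxBl mul_scalar_mx.
rewrite lagZ horner_mxZ; apply/matrixP => x l; rewrite !mxE.
by rewrite (col_zero R_ut R_diag) ?mulr0 ?ltn_ord.
Qed.

Lemma QQ (k l : 'I_d.+1) : Qm k *m Qm l = (k == l)%:R *: Qm l.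
Proof. by rewrite /Qm (eig_horner _ (Qeig l)) lag_eval. Qed.

Lemma Econj j : prim_idem As ths j = Sm *m Qm j *m invmx Sm.
Proof.
rewrite prim_idemE /Qm /Rm horner_conj ?S_unit //.
by rewrite !mulmxA mulmxV ?S_unit // mul1mx mulmxK ?S_unit.
Qed.

Lemma Aconj : A = Sm *m Lm *m invmx Sm.
Proof. by rewrite /Lm !mulmxA mulmxV ?S_unit // mul1mx mulmxK ?S_unit. Qed.

Lemma Asconj : As = Sm *m Rm *m invmx Sm.
Proof. by rewrite /Rm !mulmxA mulmxV ?S_unit // mul1mx mulmxK ?S_unit. Qed.

Lemma O1 (i j : 'I_d.+1) : (i.+1 < j)%N ->
  prim_idem As ths j *m A *m prim_idem As ths i = 0.
Proof.
move=> ij; rewrite !Econj [in X in _ *m X *m _]Aconj conj3 ?S_unit //.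
apply/eqP; rewrite conj_eq0 ?S_unit //; apply/eqP.
apply/matrixP => x y; rewrite !mxE big1 // => n _.
case: (ltnP i n) => [inn|ni]; first by rewrite Qb // mulr0.
rewrite mxE big1 ?mul0r // => m _.
case: (ltnP m j) => [mj|jm]; first by rewrite Qa // mul0r.
by rewrite L_low ?mulr0 //; lia.
Qed.

Lemma O2 (i j : 'I_d.+1) : j = i.+1 :> nat ->
  prim_idem As ths j *m A *m prim_idem As ths i != 0.
Proof.
move=> ji; rewrite !Econj [in X in _ *m X *m _]Aconj conj3 ?S_unit //.
rewrite conj_eq0 ?S_unit //.
have key : (Qm j *m Lm *m Qm i) j i = Lm j i.
  rewrite mxE (bigD1 i) //= [X in _ + X]big1 ?addr0 => [|n ni].
    rewrite Qc mulr1 mxE (bigD1 j) //= Qc mul1r [X in _ + X]big1 ?addr0 // => m mj.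
    case: (ltnP m j) => [lmj|jm]; first by rewrite Qa // mul0r.
    have : (m : nat) != j by [].
    by move=> h; rewrite L_low ?mulr0 //; lia.
  case: (ltnP i n) => [inn|nii]; first by rewrite Qb // mulr0.
  have : (n : nat) != i by [].
  move=> h; rewrite mxE big1 ?mul0r // => m _.
  case: (ltnP m j) => [mj|jm]; first by rewrite Qa // mul0r.
  by rewrite L_low ?mulr0 //; lia.
apply/negP => /eqP /matrixP /(_ j i); rewrite key => h.
by have := L_sub ji; rewrite h mxE eqxx.
Qed.

Definition Qp : M := \matrix_(x, l) Qm l x l.

Lemma Qp_unit : Qp \in unitmx.
Proof.
rewrite unitmxE -det_tr det_trig.
  by rewrite (eq_bigr (fun _ => 1)) ?prodr_const ?expr1n ?unitr1 // => i _; rewrite !mxE Qc.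
by apply/is_trig_mxP => i j ij; rewrite !mxE Qb.
Qed.

Lemma QpE j : Qm j *m Qp = Qp *m delta_mx j j.
Proof.
apply/matrixP => x l.
have -> : (Qm j *m Qp) x l = (Qm j *m Qm l) x l.
  by rewrite !mxE; apply: eq_bigr => n _; rewrite mxE.
rewrite QQ mxE mxE (bigD1 j) //= [X in _ + X]big1 ?addr0 => [|n nj]; last first.
  by rewrite [delta_mx _ _ _ _]mxE (negPf nj) mulr0.
rewrite [Qp x j]mxE [delta_mx _ _ _ _]mxE /=; case: (eqVneq j l) => [<-|nl]; first by rewrite (eqxx j) mulr1 mul1r.
by rewrite mul0r andbF mulr0.
Qed.

Lemma O3 : exists P : M, P \in unitmx /\
  (forall j, invmx P *m prim_idem As ths j *m P = delta_mx j j) /\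
  is_diag_mx (invmx P *m As *m P).
Proof.
have uP : Sm *m Qp \in unitmx by rewrite unitmx_mul S_unit Qp_unit.
exists (Sm *m Qp); split => //; split.
  move=> j; rewrite -mulmxA.
  have -> : prim_idem As ths j *m (Sm *m Qp) = (Sm *m Qp) *m delta_mx j j.
    rewrite Econj -!mulmxA (mulmxA (invmx Sm)) mulVmx ?S_unit // mul1mx QpE.
    by rewrite !mulmxA.
  by rewrite mulKmx.
rewrite -mulmxA; have -> : As *m (Sm *m Qp) = (Sm *m Qp) *m diag_mx (\row_l ths l).
  have RQ : Rm *m Qp = Qp *m diag_mx (\row_l ths l).
    apply/matrixP => x l; rewrite mul_mx_diag !mxE.
    have -> : \sum_n Rm x n * Qp n l = (Rm *m Qm l) x l.
      by rewrite mxE; apply: eq_bigr => n _; rewrite /Qp mxE.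
    by rewrite Qeig mxE mulrC.
  have -> : As *m (Sm *m Qp) = Sm *m (Rm *m Qp) by rewrite /Rm !mulmxA mulmxV ?S_unit // mul1mx.
  rewrite RQ.
  by rewrite !mulmxA.
by rewrite mulKmx // diag_mx_is_diag.
Qed.

End Core.

End Gen.

Unset Implicit Arguments.
Set Strict Implicit.

Theorem lemma5p9 (K : fieldType) (d : nat) (A As : 'M[K]_(d.+1))
    (th ths : 'I_d.+1 -> K) :
  mult_free A -> mult_free As ->
  eig_ordering A th -> eig_ordering As ths ->
  (exists U : 'I_d.+1 -> 'M[K]_(d.+1), split_decomposition A As th ths U) ->
  (leonard_pair A As <->
   leonard_system A As (prim_idem A th) (prim_idem As ths)).
Proof.
move=> _ _ [thinj _] [thsinj _] [U [[rk [hsum _]] [hA1 [hAd [hAs1 hAs0]]]]].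
pose u i := (nz_row (U i)^T)^T.
have hspan : ((1%:M : 'M[K]_(d.+1)) <= \sum_(i < d.+1) <<(u i)^T>>)%MS.
  have e : (\sum_(i < d.+1) (U i)^T :=: \sum_(i < d.+1) <<(u i)^T>>)%MS.
    apply: eqmx_sums => i _; rewrite /u trmxK.
    apply: eqmx_trans (eqmx_sym (nz_row_eq _)) (eqmx_sym (genmxE _)).
    by rewrite mxrank_tr rk.
  by rewrite -e hsum submx_refl.
have hA : forall i j : 'I_d.+1, j = i.+1 :> nat ->
    exists2 c, c != 0 & A *m u i = th i *: u i + c *: u j.
  move=> i j ji; have [c c0 hc] := split_step (rk i) (rk j) (hA1 i j ji).
  by exists c => //; exact: shift hc.
have hAs : forall i j : 'I_d.+1, j = i.+1 :> nat ->
    exists2 c, c != 0 & As *m u j = ths j *: u j + c *: u i.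
  move=> i j ji; have [c c0 hc] := split_step (rk j) (rk i) (hAs1 i j ji).
  by exists c => //; exact: shift hc.
have hAsE : forall i j : 'I_d.+1, j = i.+1 :> nat ->
    exists c, As *m u j = ths j *: u j + c *: u i.
  by move=> i j ji; have [c _ h] := hAs i j ji; exists c.
have hAs0' : As *m u ord0 = ths ord0 *: u ord0.
  by have := split_zero hAs0; rewrite mulmxBl mul_scalar_mx => /eqP; rewrite subr_eq0 => /eqP.
have hAd' : A *m u ord_max = th ord_max *: u ord_max.
  by have := split_zero hAd; rewrite mulmxBl mul_scalar_mx => /eqP; rewrite subr_eq0 => /eqP.
pose v i := u (@rev_ord d.+1 i).
have hspan' : ((1%:M : 'M[K]_(d.+1)) <= \sum_(i < d.+1) <<(v i)^T>>)%MS.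
  have -> : (\sum_(i < d.+1) <<(v i)^T>>)%MS = (\sum_(i < d.+1) <<(u i)^T>>)%MS.
    by rewrite [RHS](reindex_inj rev_ord_inj).
  exact: hspan.
have hA' : forall i j : 'I_d.+1, j = i.+1 :> nat ->
    exists2 c, c != 0 & As *m v i = (ths \o (@rev_ord d.+1)) i *: v i + c *: v j.
  move=> i j ji; apply: hAs => /=; have := ltn_ord j; lia.
have hAs' : forall i j : 'I_d.+1, j = i.+1 :> nat ->
    exists c, A *m v j = (th \o (@rev_ord d.+1)) j *: v j + c *: v i.
  move=> i j ji.
  have e : (@rev_ord d.+1 i : nat) = (@rev_ord d.+1 j).+1 by rewrite /=; have := ltn_ord j; lia.
  by have [c _ h] := hA _ _ e; exists c.
have hAs0v : A *m v ord0 = (th \o (@rev_ord d.+1)) ord0 *: v ord0.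
  rewrite /v /=; have -> : rev_ord (@ord0 d) = ord_max by apply: val_inj => /=; lia.
  exact: hAd'.
have thinj' : injective (th \o (@rev_ord d.+1)) := inj_comp thinj rev_ord_inj.
have E1 : forall a b : 'I_d.+1, (a.+1 < b)%N ->
    prim_idem A th a *m As *m prim_idem A th b = 0.
  move=> a b ab.
  have := @O1 _ _ As A (ths \o (@rev_ord d.+1)) (th \o (@rev_ord d.+1)) v
    hspan' hA' hAs' hAs0v (rev_ord b) (rev_ord a).
  rewrite !prim_idem_rev !rev_ordK; apply => /=; have := ltn_ord b; lia.
have E2 : forall a b : 'I_d.+1, b = a.+1 :> nat ->
    prim_idem A th a *m As *m prim_idem A th b != 0.
  move=> a b ab.
  have := @O2 _ _ As A (ths \o (@rev_ord d.+1)) (th \o (@rev_ord d.+1)) v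
    hspan' hA' hAs' hAs0v thinj' (rev_ord b) (rev_ord a).
  rewrite !prim_idem_rev !rev_ordK; apply => /=; have := ltn_ord b; lia.
have O1f := O1 hspan hA hAsE hAs0'.
have O2f := O2 hspan hA hAsE hAs0' thsinj.
split.
  move=> [[P [uP [triP diagP]]] [Q [uQ [triQ diagQ]]]].
  rewrite /mx_in_basis in triP diagP triQ diagQ.
  have sS := C3 ths uP diagP triP.
  have sE := C3 th uQ diagQ triQ.
  move=> i j; split; [|split; [|split]].
  - case => h; last exact: O1f h.
    by apply/eqP; rewrite sS; apply/eqP; exact: O1f h.
  - case => h; last exact: O2f h.
    by rewrite sS; exact: O2f h.
  - case => h; first exact: E1 h.
    by apply/eqP; rewrite sE; apply/eqP; exact: E1 h.
  - case => h; first exact: E2 h.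
    by rewrite sE; exact: E2 h.
move=> LS; split.
  have [P [uP [hP dP]]] := O3 hspan hAsE hAs0' thsinj.
  exists P; split => //; split => //; rewrite /mx_in_basis.
  have c4 := C4 (s := id) A uP hP.
  split => x y h.
    by apply/eqP; rewrite -c4; apply/eqP; exact: (LS x y).1 h.
  by rewrite -c4; exact: (LS x y).2.1 h.
have [Q [uQ [hQ dQ]]] := O3 hspan' hAs' hAs0v thinj'.
exists Q; split => //; split => //; rewrite /mx_in_basis.
have hQ' : forall j, invmx Q *m prim_idem A th j *m Q = delta_mx (rev_ord j) (rev_ord j).
  by move=> j; rewrite -{1}(rev_ordK j) -prim_idem_rev hQ.
have c4 := C4 As uQ hQ'.
split => x y h.
  apply/eqP; rewrite -[x]rev_ordK -[y]rev_ordK -c4; apply/eqP.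
  by apply: (LS _ _).2.2.1; move: h => /=; have := ltn_ord x; have := ltn_ord y; lia.
rewrite -[x]rev_ordK -[y]rev_ordK -c4.
by apply: (LS _ _).2.2.2; move: h => /=; have := ltn_ord x; have := ltn_ord y; lia.
Qed.
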